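(* Assume the network is regular. Let $j^*\in\mathcal E$. (i) $j^*\leadsto j^*$ holds if and only if there exists a child selection $J:\mathcal M\to\mathcal E$ with $j^*\notin J(\mathcal M)$ such that $J(\mathcal M)$ selects an $S$-basis. (ii) For $j'\in\mathcal E$ with $j'\neq j^*$: $j^*\leadsto j'$ holds if and only if there exists a child selection $J:\mathcal M\to\mathcal E$ with $j^*\notin J(\mathcal M)$ and $j'\in J(\mathcal M)$ such that the swapped set $\{j^*\}\cup J(\mathcal M)\setminus\{j'\}$ selects an $S$-basis.
   Context: A reaction network consists of a finite set of metabolites $\mathcal M=\{1,\dots,M\}$ and a finite set of reactions $\mathcal E=\{1,\dots,E\}$. Each reaction $j$ has an input stoichiometric vector $y^j\in\mathbb R_{\ge0}^M$ and an output stoichiometric vector $\bar y^j\in\mathbb R_{\ge0}^M$. Write $m\vdash j$ iff $y^j_m\neq 0$. The stoichiometric matrix $S$ is the real $M\times E$ matrix whose $j$-th column is $S^j=\bar y^j-y^j$; it is assumed to have full rank $M$. The rate matrix $R=(r_{jm})$ is the $E\times M$ matrix whose entries $r_{jm}$ with $m\vdash j$ are independent indeterminates, and $r_{jm}=0$ whenever $m\not\vdash j$. ''Nonzero algebraically'' means nonzero as a polynomial/rational function in these indeterminates. For $\mathcal E'\subseteq\mathcal E$, $S^{\mathcal E'}$ denotes the submatrix of columns indexed by $\mathcal E'$; $\mathcal E'$ selects an $S$-basis if $|\mathcal E'|=M$ and $\det S^{\mathcal E'}\neq0$. A child selection is an injective map $J:\mathcal M\to\mathcal E$ with $m\vdash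 J(m)$ for all $m$. The network is regular if $\det(SR)\ne0$ algebraically. Let $B=\begin{pmatrix}-\mathrm{id}_{\mathcal E}&R\\ S&0\end{pmatrix}$, a square matrix with rows and columns indexed by the disjoint union $\mathcal E\sqcup\mathcal M$; for a regular network it is invertible over the field of rational functions in the $r_{jm}$. For $\alpha\in\mathcal E\sqcup\mathcal M$ set $z^\alpha=-B^{-1}e_\alpha$, and write $\alpha\leadsto\beta$ (''$\alpha$ influences $\beta$'') for $\beta\in\mathcal E\sqcup\mathcal M$ if the component $z^\alpha_\beta$ is nonzero algebraically. (For $j^*\in\mathcal E$ one has $z^{j^*}=(\Phi^{j^*},\delta x^{j^*})$ with $\delta x^{j^*}=-(SR)^{-1}Se_{j^*}$ the linearized steady-state concentration response and $\Phi^{j^*}=e_{j^*}+R\,\delta x^{j^*}$ the flux response to a perturbation of the rate of reaction $j^*$.) *)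

(* Defs.v *)
From HB Require Import structures.
From mathcomp Require Import all_boot all_order all_algebra.
From mathcomp Require Import fraction.
Set Implicit Arguments. Unset Strict Implicit. Unset Printing Implicit Defensive.
Import Order.TTheory GRing.Theory Num.Theory.
Local Open Scope ring_scope.

(* Polynomial ring in n commuting indeterminates over F, built as iterated
   univariate polynomials: mpoly F 0 = F, mpoly F n.+1 = {poly mpoly F n}. *)
Fixpoint mpoly (F : idomainType) (n : nat) : idomainType :=
  if n is n'.+1 then ({poly mpoly F n'} : idomainType) else F.

Fixpoint mconst (F : idomainType) (n : nat) (c : F) : mpoly F n :=
  match n return mpoly F n with
  | 0 => c
  | n'.+1 => (mconst n' c)%:P
  end.

(* the indeterminate number i (for i < n); 0 if i >= n *)
Fixpoint mvar (F : idomainType) (n : nat) (i : nat) : mpoly F n :=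
  match n return mpoly F n with
  | 0 => 0
  | n'.+1 => if i == n' then 'X else (mvar F n' i)%:P
  end.

Definition ratfun (F : idomainType) (n : nat) : fieldType := {fraction (mpoly F n)}.

Section Network.
Variables (F : realFieldType) (M E : nat).
(* y, ybar : 'M[F]_(M,E); column j is the input / output stoichiometric vector
   y^j, ybar^j of reaction j. *)
Variables (y ybar : 'M[F]_(M, E)).

Definition enters (m : 'I_M) (j : 'I_E) : bool := y m j != 0.

Definition stoich : 'M[F]_(M, E) := ybar - y.

(* number of indeterminates: one per pair (j,m); the pair (j,m) gets index
   j*M + m. Indeterminates for pairs with m not |- j are never used. *)
Definition nvars : nat := (E * M)%N.
Definition K : fieldType := ratfun F nvars.

Definition toK (c : F) : K := @FracField.tofrac (mpoly F nvars) (mconst nvars c).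

Definition rate : 'M[K]_(E, M) :=
  \matrix_(j < E, m < M)
     if enters m j then @FracField.tofrac (mpoly F nvars) (mvar F nvars (j * M + m)) else 0.

Definition stoichK : 'M[K]_(M, E) := map_mx toK stoich.

Definition regular : Prop := \det (stoichK *m rate) != 0.

(* B = [ -id_E  R ; S  0 ], rows/columns indexed by 'I_(E + M);
   reactions are lshift M j, metabolites are rshift E m. *)
Definition Bmat : 'M[K]_(E + M) := block_mx (- 1%:M) rate stoichK 0.

Definition zvec (alpha : 'I_(E + M)) : 'cV[K]_(E + M) :=
  - (invmx Bmat *m delta_mx alpha 0).

Definition influences (alpha beta : 'I_(E + M)) : bool := zvec alpha beta 0 != 0.

Definition rxn (j : 'I_E) : 'I_(E + M) := lshift M j.

Definition child_selection (J : 'I_M -> 'I_E) : Prop :=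
  injective J /\ forall m, enters m (J m).

(* E' selects an S-basis: |E'| = M and det S^{E'} <> 0, where the columns of
   S^{E'} are listed via some bijection 'I_M -> E' (the nonvanishing of the
   determinant does not depend on the ordering). *)
Definition selects_basis (E' : {set 'I_E}) : Prop :=
  #|E'| = M /\
  exists f : 'I_M -> 'I_E,
    injective f /\ [set f i | i in 'I_M] = E' /\ \det (colsub f stoich) != 0.

End Network.

(* Main.v *)
Require Import Defs.
From HB Require Import structures.
From mathcomp Require Import all_boot all_order all_fingroup all_algebra.
From mathcomp Require Import fraction ring zify.
Set Implicit Arguments. Unset Strict Implicit. Unset Printing Implicit Defensive.
Import Order.TTheory GRing.Theory Num.Theory.
Local Open Scope ring_scope.

Section MP.
Variable F : idomainType.

Lemma mconst_zmod n : zmod_morphism (@mconst F n).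
Proof. elim: n => [//|n IH] x y /=. by rewrite IH polyCB. Qed.
Lemma mconst_monoid n : monoid_morphism (@mconst F n).
Proof. elim: n => [//|n [IH1 IH2]] /=; split; first by rewrite IH1.
by move=> x y; rewrite IH2 polyCM. Qed.
HB.instance Definition _ n := GRing.isZmodMorphism.Build F (mpoly F n) (@mconst F n) (@mconst_zmod n).
HB.instance Definition _ n := GRing.isMonoidMorphism.Build F (mpoly F n) (@mconst F n) (@mconst_monoid n).

Variable a : nat -> F.
Fixpoint mev n : mpoly F n -> F :=
  match n return mpoly F n -> F with
  | 0 => fun p => p
  | n'.+1 => fun p => @mev n' ((p : {poly mpoly F n'}).[mconst n' (a n')])
  end.

Lemma mev_zmod n : zmod_morphism (@mev n).
Proof. elim: n => [//|n IH] x y /=. by rewrite hornerD hornerN IH. Qed.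
Lemma mev_monoid n : monoid_morphism (@mev n).
Proof. elim: n => [//|n [IH1 IH2]] /=; split; first by rewrite hornerC IH1.
by move=> x y; rewrite hornerM IH2. Qed.
HB.instance Definition _ n := GRing.isZmodMorphism.Build (mpoly F n) F (@mev n) (@mev_zmod n).
HB.instance Definition _ n := GRing.isMonoidMorphism.Build (mpoly F n) F (@mev n) (@mev_monoid n).

Lemma mev_const n c : mev (mconst n c) = c.
Proof. elim: n => [//|n IH] /=. by rewrite hornerC IH. Qed.
Lemma mev_var n i : (i < n)%N -> mev (mvar F n i) = a i.
Proof. elim: n => [//|n IH] /= lt.
case: eqP => [->|ne]; first by rewrite hornerX mev_const.
rewrite hornerC IH //. by move: lt; rewrite ltnS leq_eqVlt => /orP[/eqP|]. Qed.
End MP.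

Section LA.
Variable R : comPzRingType.

Lemma det_mul_rowsub m n (P : 'M[R]_(m,n)) (Q : 'M[R]_(n,m)) :
  \det (P *m Q) = \sum_(f : {ffun 'I_m -> 'I_n}) (\prod_i P i (f i)) * \det (rowsub f Q).
Proof.
rewrite /determinant.
transitivity (\sum_(s : 'S_m) \sum_(f : {ffun 'I_m -> 'I_n})
   (-1)^+s * \prod_i (P i (f i) * Q (f i) (s i))).
  apply: eq_bigr => s _; rewrite -big_distrr /=; congr (_ * _).
  rewrite -(bigA_distr_bigA (fun i j => P i j * Q j (s i))).
  by apply: eq_bigr => i _; rewrite mxE.
rewrite exchange_big; apply: eq_bigr => f _ /=; rewrite big_distrr.
apply: eq_bigr => s _ /=; rewrite big_split /= mulrCA; congr (_ * (_ * _)).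
by apply: eq_bigr => i _; rewrite mxE.
Qed.

Lemma det_mul_colsub m n (P : 'M[R]_(m,n)) (Q : 'M[R]_(n,m)) :
  \det (P *m Q) = \sum_(f : {ffun 'I_m -> 'I_n}) (\prod_i Q (f i) i) * \det (colsub f P).
Proof.
rewrite -det_tr trmx_mul det_mul_rowsub; apply: eq_bigr => f _; congr (_ * _).
  by apply: eq_bigr => i _; rewrite mxE.
rewrite -det_tr; congr (\det _); apply/matrixP => i j; rewrite !mxE //.
Qed.

Lemma det_rank1_mul n (X : 'M[R]_n) (v : 'cV[R]_n) (w : 'rV[R]_n) :
  \det (X + v *m w) * \det X = (\det X + (w *m \adj X *m v) 0 0) * \det X.
Proof.
pose C := block_mx (1%:M : 'M[R]_1) w (-v) X.
have eC : C = block_mx 1%:M 0 (-v) 1%:M *m block_mx 1%:M w 0 (X + v *m w).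
  rewrite mulmx_block /C !mul1mx !mul0mx ?mulmx0 !addr0 mulmx1 mulNmx.
  by rewrite addrC addrK.
have dC : \det C = \det (X + v *m w).
  by rewrite eC det_mulmx det_lblock det_ublock !det1 !mul1r.
have eC2 : C *m block_mx (\det X)%:M 0 (\adj X *m v) 1%:M
   = block_mx ((\det X)%:M + w *m (\adj X *m v)) w 0 X.
  by rewrite mulmx_block /C !mul1mx mulmx0 add0r mulmx1 (mulmxA X) mul_mx_adj mul_scalar_mx mul_mx_scalar add0r mulmx1 scalerN addNr.
have := congr1 determinant eC2.
rewrite det_mulmx det_lblock det_ublock dC det1 mulr1 det_scalar1 => ->.
by rewrite det_mx11 -mulmxA !mxE eqxx mulr1n.
Qed.
End LA.

Section LA2.
Variable R : idomainType.
Lemma det_rank1 n (X : 'M[R]_n) (v : 'cV[R]_n) (w : 'rV[R]_n) :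
  \det (X + v *m w) = \det X + (w *m \adj X *m v) 0 0.
Proof.
pose Xp : 'M[{poly R}]_n := char_poly_mx (- X).
have nz : \det Xp != 0 by apply: monic_neq0; apply: char_poly_monic.
have := det_rank1_mul Xp (map_mx polyC v) (map_mx polyC w).
move/(mulIf nz) => h.
have ev m k (A : 'M[R]_(m,k)) : map_mx (horner_eval (0:R)) (map_mx polyC A) = A.
  by apply/matrixP => i j; rewrite !mxE /horner_eval hornerC.
have eX : map_mx (horner_eval (0:R)) Xp = X.
  apply/matrixP => i j; rewrite !mxE /horner_eval hornerD hornerN hornerMn hornerX hornerC.
  by rewrite mul0rn sub0r opprK.
transitivity ((horner_eval (0:R)) (\det (Xp + map_mx polyC v *m map_mx polyC w))).
  by rewrite -det_map_mx map_mxD map_mxM eX !ev.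
rewrite h rmorphD -det_map_mx eX; congr (_ + _).
transitivity ((map_mx (horner_eval (0:R)) (map_mx polyC w *m \adj Xp *m map_mx polyC v)) 0 0); first by rewrite [RHS]mxE.
by rewrite !map_mxM map_mx_adj eX !ev.
Qed.

Lemma det_rank1_linl n (X : 'M[R]_n) (v : 'cV[R]_n) (w1 w2 : 'rV[R]_n) :
  \det (X + v *m (w1 + w2)) + \det X = \det (X + v *m w1) + \det (X + v *m w2).
Proof. rewrite !det_rank1 mulmxDl mulmxDl !mxE; ring. Qed.
Lemma det_rank1_linr n (X : 'M[R]_n) (v1 v2 : 'cV[R]_n) (w : 'rV[R]_n) :
  \det (X + (v1 + v2) *m w) + \det X = \det (X + v1 *m w) + \det (X + v2 *m w).
Proof. rewrite !det_rank1 mulmxDr !mxE; ring. Qed.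
End LA2.

Section Z.
Variable R : pzRingType.
Definition zrow m n (j : 'I_m) (Y : 'M[R]_(m,n)) : 'M[R]_(m,n) :=
  \matrix_(i,k) if i == j then 0 else Y i k.
Definition zcol m n (j : 'I_n) (X : 'M[R]_(m,n)) : 'M[R]_(m,n) :=
  \matrix_(i,k) if k == j then 0 else X i k.
Lemma mul_zrow m n p (X : 'M[R]_(m,n)) (Y : 'M[R]_(n,p)) j :
  X *m Y = X *m zrow j Y + col j X *m row j Y.
Proof.
apply/matrixP => i k; rewrite !mxE (bigD1 j) //= [X in _ = _ + X]big_ord1 !mxE addrC; congr (_ + _).
rewrite [RHS](bigD1 j) //= !mxE eqxx mulr0 add0r; apply: eq_bigr => l /negbTE ne; by rewrite mxE ne.
Qed.
Lemma mul_zcol m n p (X : 'M[R]_(m,n)) (Y : 'M[R]_(n,p)) j :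
  X *m Y = zcol j X *m Y + col j X *m row j Y.
Proof.
apply/matrixP => i k; rewrite !mxE (bigD1 j) //= [X in _ = _ + X]big_ord1 !mxE addrC; congr (_ + _).
rewrite [RHS](bigD1 j) //= !mxE eqxx mul0r add0r; apply: eq_bigr => l /negbTE ne; by rewrite mxE ne.
Qed.
End Z.

Lemma aux1 (R : comPzRingType) (x u d : R) : x + u = d + d -> d - (x - d) = u.
Proof. move=> h. have -> : x = d + d - u by rewrite -h addrK. ring. Qed.
Lemma aux2 (R : comPzRingType) (x1 u d1 d2 u0 d3 : R) :
  x1 + u = d1 + d2 -> d2 + u0 = d3 + u -> x1 - d1 = d3 - u0.
Proof. move=> h1 h2. have -> : x1 = d1 + d2 - u by rewrite -h1 addrK.
have -> : d2 = d3 + u - u0 by rewrite -h2 addrK. ring. Qed.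

Section Net.
Variables (F : realFieldType) (M E : nat) (y ybar : 'M[F]_(M, E)).

Lemma toK_zmod : zmod_morphism (@toK F M E).
Proof. by move=> a b; rewrite /toK !rmorphB. Qed.
Lemma toK_monoid : monoid_morphism (@toK F M E).
Proof. by split; [rewrite /toK !rmorph1 | move=> a b; rewrite /toK !rmorphM]. Qed.
HB.instance Definition _ := GRing.isZmodMorphism.Build F (K F M E) (@toK F M E) toK_zmod.
HB.instance Definition _ := GRing.isMonoidMorphism.Build F (K F M E) (@toK F M E) toK_monoid.

Local Notation S := (stoich y ybar).
Local Notation SK := (stoichK y ybar).
Local Notation Rt := (rate y).
Local Notation A := (SK *m Rt).

Lemma zvecE (reg : regular y ybar) (js j' : 'I_E) :
  zvec y ybar (rxn M js) (rxn M j') 0 = (j' == js)%:R - (Rt *m invmx A *m SK) j' js.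
Proof.
have uA : A \in unitmx by rewrite unitmxE unitfE.
pose C := block_mx (Rt *m invmx A *m SK - 1%:M) (Rt *m invmx A) (invmx A *m SK) (invmx A).
have BC : Bmat y ybar *m C = 1%:M.
  rewrite /Bmat /C mulmx_block [RHS]scalar_mx_block; congr block_mx.
  - by rewrite mulNmx mul1mx opprB mulmxA subrK.
  - by rewrite mulNmx mul1mx addNr.
  - by rewrite mul0mx addr0 mulmxBr mulmx1 !mulmxA (mulmxV uA) mul1mx subrr.
  - rewrite mul0mx addr0 mulmxA. exact: (mulmxV uA).
have [uB _] := mulmx1_unit BC.
have eC : invmx (Bmat y ybar) = C.
  rewrite -[C]mul1mx -(mulVmx uB) -mulmxA BC. exact: (esym (mulmx1 _)).
rewrite /zvec eC -colE mxE /rxn [col _ _ _ _]mxE block_mxEul !mxE opprB eq_sym. reflexivity.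
Qed.

Lemma entry3 m n p q (P : 'M[K F M E]_(m,n)) (Q : 'M_(n,p)) (T : 'M_(p,q)) i k :
  (P *m Q *m T) i k = (row i P *m Q *m col k T) 0 0.
Proof. rewrite !mxE; apply: eq_bigr => l _; rewrite !mxE; congr (_ * _).
by apply: eq_bigr => l' _; rewrite !mxE. Qed.

Lemma phi_eq (reg : regular y ybar) (js j' : 'I_E) :
  zvec y ybar (rxn M js) (rxn M j') 0 * \det A =
  (j' == js)%:R * \det A - (\det (A + col js SK *m row j' Rt) - \det A).
Proof.
have uA : A \in unitmx by rewrite unitmxE unitfE.
have dA : \det A != 0 by [].
rewrite zvecE // mulrBl; congr (_ - _).
rewrite det_rank1 addrC addKr /invmx uA -scalemxAr -scalemxAl mxE entry3 mulrC mulrA.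
by rewrite mulfV // mul1r.
Qed.

Definition swp (j' js : 'I_E) (j : 'I_E) : 'I_E := if j == j' then js else j.

Lemma phi_self (reg : regular y ybar) (js : 'I_E) :
  zvec y ybar (rxn M js) (rxn M js) 0 * \det A = \det (SK *m zrow js Rt).
Proof.
rewrite phi_eq // eqxx mul1r.
have E1 := mul_zrow SK Rt js.
set A1 := SK *m zrow js Rt in E1 *.
set a := col js SK in E1 *; set r := row js Rt in E1 *.
have h := det_rank1_linl A1 a r r.
have e : A + a *m r = A1 + a *m (r + r) by rewrite E1 mulmxDr addrA.
rewrite e E1. exact: aux1 h.
Qed.

Lemma phi_other (reg : regular y ybar) (js j' : 'I_E) : j' != js ->
  zvec y ybar (rxn M js) (rxn M j') 0 * \det A =
  - (\det (colsub (swp j' js) SK *m zrow js Rt) - \det (zcol j' SK *m zrow js Rt)).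
Proof.
move=> ne.
rewrite phi_eq // (negbTE ne) mul0r sub0r.
have E1 := mul_zrow SK Rt js.
have E2 := mul_zcol SK (zrow js Rt) j'.
have E3 := mul_zcol (colsub (swp j' js) SK) (zrow js Rt) j'.
have rr : row j' (zrow js Rt) = row j' Rt.
  by apply/matrixP => i k; rewrite !mxE (negbTE ne).
have z3 : zcol j' (colsub (swp j' js) SK) = zcol j' SK.
  apply/matrixP => i k; rewrite !mxE /swp; case: eqP => // _.
have c3 : col j' (colsub (swp j' js) SK) = col js SK.
  by apply/matrixP => i k; rewrite !mxE /swp eqxx.
rewrite rr in E2 E3; rewrite z3 c3 in E3.
rewrite E3; congr (- _).
set A1 := SK *m zrow js Rt in E1 E2 *.
set A0 := zcol j' SK *m zrow js Rt in E2 E3 *.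
set a := col js SK in E1 E3 *; set b := col j' SK in E2 *.
set rs := row js Rt in E1 *; set r' := row j' Rt in E2 E3 *.
have h1 := det_rank1_linl A1 a rs r'.
have h2 := det_rank1_linr A0 a b r'.
have e1 : A + a *m r' = A1 + a *m (rs + r') by rewrite E1 mulmxDr addrA.
have e2 : A1 + a *m r' = A0 + (a + b) *m r' by rewrite E2 mulmxDl addrAC addrA.
rewrite e1 E1; rewrite -e2 -E2 in h2.
exact: aux2 h1 h2.
Qed.

Definition Rp : 'M[mpoly F (nvars M E)]_(E,M) :=
  \matrix_(j < E, m < M) if enters y m j then mvar F (nvars M E) (j * M + m) else 0.

Lemma rate_map : Rt = map_mx (@FracField.tofrac _) Rp.
Proof. apply/matrixP => j m; rewrite !mxE; case: ifP => _ //; by rewrite rmorph0. Qed.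

Definition qf (X : 'M[F]_(M,E)) js := \det (map_mx (@mconst F (nvars M E)) X *m zrow js Rp).

Lemma qfE (X : 'M[F]_(M,E)) js :
  \det (map_mx (@toK F M E) X *m zrow js Rt) = FracField.tofrac (qf X js).
Proof.
rewrite /qf -det_map_mx map_mxM; congr (\det (_ *m _)).
  by apply/matrixP => i k; rewrite !mxE.
apply/matrixP => i k; rewrite !mxE; case: ifP => _; first by rewrite rmorph0.
case: ifP => _ //; by rewrite rmorph0.
Qed.

Definition aJ (J : 'I_M -> 'I_E) (n : nat) : F :=
  if [exists k : 'I_M, n == (J k * M + k)%N] then 1 else 0.

Lemma pair_inj (m a b c d : nat) : (b < m)%N -> (d < m)%N -> (a * m + b = c * m + d)%N -> a = c /\ b = d.
Proof.
move=> bm dm h.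
have bd : b = d.
  have := congr1 (modn^~ m) h; rewrite /= !modnMDl !modn_small //.
split=> //; subst d; move/eqP: h; rewrite eqn_add2r eqn_pmul2r; first by move/eqP.
by apply: leq_ltn_trans bm.
Qed.

Lemma aJE J (i : 'I_E) (m : 'I_M) : aJ J (i * M + m) = (J m == i)%:R.
Proof.
rewrite /aJ; case: existsP => [[k /eqP h]|nex].
  have [e1 e2] := pair_inj (ltn_ord m) (ltn_ord k) h.
  have km : m = k := val_inj e2. subst k.
  have -> : J m = i by apply: val_inj; rewrite /= e1.
  by rewrite eqxx.
case: eqP => // e; exfalso; apply: nex; exists m; by rewrite e.
Qed.

Lemma qf_ev (J : 'I_M -> 'I_E) (X : 'M[F]_(M,E)) js :
  child_selection y J -> js \notin [set J m | m in 'I_M] ->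
  mev (aJ J) (qf X js) = \det (colsub J X).
Proof.
move=> [Jinj Jent] njs.
rewrite /qf -det_map_mx map_mxM; congr (\det _).
apply/matrixP => k m; rewrite !mxE.
rewrite (bigD1 (J m)) //= big1 ?addr0.
  rewrite !mxE mev_const; case: eqP => [e|_].
    by exfalso; move/negP: njs; apply; apply/imsetP; exists m.
  rewrite Jent mev_var ?aJE ?eqxx ?mulr1 //.
  rewrite /nvars; have := ltn_ord (J m); have := ltn_ord m.
  move: (nat_of_ord (J m)) (nat_of_ord m) => a b ha hb.
  nia.
move=> i ne; rewrite !mxE mev_const; case: eqP => _; first by rewrite rmorph0 mulr0.
case: ifP => ent; last by rewrite rmorph0 mulr0.
rewrite mev_var ?aJE; last first.
  rewrite /nvars; have := ltn_ord i; have := ltn_ord m.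
  move: (nat_of_ord i) (nat_of_ord m) => a b ha hb.
  nia.
by rewrite eq_sym (negbTE ne) mulr0.
Qed.
End Net.

Lemma det_colsub_noninj (R : comPzRingType) n m (X : 'M[R]_(n,m)) (f : 'I_n -> 'I_m) :
  ~~ injectiveb f -> \det (colsub f X) = 0.
Proof.
case/injectivePn => i1 [i2 ne e]; rewrite -det_tr.
apply: (determinant_alternate ne) => j; by rewrite !mxE e.
Qed.

Lemma det_zero_col (R : comPzRingType) n (X : 'M[R]_n) k :
  (forall i, X i k = 0) -> \det X = 0.
Proof. move=> h; rewrite (expand_det_col _ k) big1 // => i _; by rewrite h mul0r. Qed.

Lemma det_colsub_sameimg (R : idomainType) n m (X : 'M[R]_(n,m)) (f g : 'I_n -> 'I_m) :
  injective f -> injective g -> [set f i | i in 'I_n] = [set g i | i in 'I_n] ->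
  (\det (colsub g X) != 0) = (\det (colsub f X) != 0).
Proof.
move=> fi gi eim.
pose sf i := odflt i [pick k | f k == g i].
have fs i : f (sf i) = g i.
  rewrite /sf; case: pickP => [k /eqP //|none].
  have : g i \in [set g i | i in 'I_n] by apply/imsetP; exists i.
  rewrite -eim => /imsetP [k _ e]; move: (none k); rewrite -e => /negbT/negP; case; exact/eqP.
have sinj : injective sf by move=> i1 i2 e; apply: gi; rewrite -!fs e.
pose s := perm sinj.
have -> : colsub g X = col_perm s (colsub f X).
  by apply/matrixP => i j; rewrite !mxE permE fs.
by rewrite col_permE det_mulmx det_perm mulf_eq0 signr_eq0 orbF.
Qed.

Lemma swp_img (E M : nat) (J : 'I_M -> 'I_E) (js j' : 'I_E) :
  injective J -> js \notin [set J m | m in 'I_M] -> j' \in [set J m | m in 'I_M] ->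
  injective (fun m => swp j' js (J m)) /\
  [set swp j' js (J m) | m in 'I_M] = js |: ([set J m | m in 'I_M] :\ j').
Proof.
move=> Ji njs ij'.
have inJ m : J m \in [set J m | m in 'I_M] by apply/imsetP; exists m.
split.
  move=> m1 m2; rewrite /swp; case: eqP => e1; case: eqP => e2 e.
  - by apply: Ji; rewrite e1 e2.
  - by move: njs; rewrite e inJ.
  - by move: njs; rewrite -e inJ.
  - exact: Ji.
apply/setP => x; rewrite in_setU1 in_setD1; apply/imsetP/idP.
  move=> [m _ ->]; rewrite /swp; case: (J m =P j') => e; first by rewrite eqxx.
  by rewrite inJ andbT; apply/orP; right; apply/eqP.
case/orP => [/eqP -> | /andP [nx /imsetP [m _ ex]]]; last subst x.
  case/imsetP: ij' => m _ e; exists m => //; by rewrite e /swp eqxx.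
exists m => //; rewrite /swp; case: (J m =P j') => // e; by rewrite e eqxx in nx.
Qed.

Lemma nz_iff (R : idomainType) (z d p : R) : d != 0 -> z * d = p -> (z != 0) = (p != 0).
Proof. move=> dn <-; by rewrite mulf_eq0 negb_or dn andbT. Qed.

Section Net2.
Variables (F : realFieldType) (M E : nat) (y ybar : 'M[F]_(M, E)).
Local Notation S := (stoich y ybar).
Local Notation SK := (stoichK y ybar).
Local Notation Rt := (rate y).

Lemma zrow_rate_nz js j m : zrow js Rt j m != 0 -> j != js /\ enters y m j.
Proof.
rewrite !mxE; case: (j =P js) => [_|ne]; first by rewrite eqxx.
case: ifP => ent; last by rewrite eqxx.
move=> _; split=> //; exact/eqP.
Qed.

Lemma extract_gen js (c : {ffun 'I_M -> 'I_E} -> K F M E) :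
  \sum_(f : {ffun 'I_M -> 'I_E}) (\prod_i zrow js Rt (f i) i) * c f != 0 ->
  exists f : {ffun 'I_M -> 'I_E}, (forall i, f i != js /\ enters y i (f i)) /\ c f != 0.
Proof.
move=> nz.
have : [exists f : {ffun 'I_M -> 'I_E}, (\prod_i zrow js Rt (f i) i) * c f != 0].
  apply: contraR nz => /existsPn h; apply/eqP.
  apply: big1 => f _; apply/eqP; move: (h f); rewrite negbK; exact.
case/existsP => f; rewrite mulf_eq0 negb_or => /andP [hp hd].
exists f; split => // i.
apply: zrow_rate_nz; move: hp; rewrite prodf_seq_neq0 => /allP; apply.
by rewrite mem_index_enum.
Qed.

Lemma colsub_toK (f : 'I_M -> 'I_E) :
  (\det (colsub f SK) != 0) = (\det (colsub f S) != 0).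
Proof.
have -> : colsub f SK = map_mx (@toK F M E) (colsub f S) by apply/matrixP => i j; rewrite !mxE.
by rewrite det_map_mx fmorph_eq0.
Qed.


Lemma part1 (reg : regular y ybar) (js : 'I_E) :
  influences y ybar (rxn M js) (rxn M js) <->
     exists J : 'I_M -> 'I_E, child_selection y J /\
       js \notin [set J m | m in 'I_M] /\
       selects_basis y ybar [set J m | m in 'I_M].
Proof.
have dA : \det (SK *m Rt) != 0 by [].
rewrite /influences (nz_iff dA (phi_self reg js)).
split.
  rewrite det_mul_colsub => /extract_gen [f [hf nzf]].
  have finj : injective f.
    apply/injectiveP; case: (boolP (injectiveb f)) => // nin; move: nzf; by rewrite (det_colsub_noninj _ nin) eqxx.
  exists f; split; first by split => // i; case: (hf i).
  split.
    apply/imsetP => [[m _ e]]; case: (hf m) => /negP h _; apply: h; by rewrite -e eqxx.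
  split; first by rewrite card_imset // card_ord.
  exists f; split => //; split => //; by rewrite -colsub_toK.
move=> [J [[Jinj Jent] [njs [_ [g [ginj [gim gdet]]]]]]].
have dJ : \det (colsub J S) != 0 by rewrite (det_colsub_sameimg _ ginj Jinj).
rewrite qfE tofrac_eq0; apply: contra dJ => /eqP q0.
by rewrite -(qf_ev _ (conj Jinj Jent) njs) q0 rmorph0.
Qed.

Lemma part2 (reg : regular y ybar) (js j' : 'I_E) : j' != js ->
  (influences y ybar (rxn M js) (rxn M j') <->
        exists J : 'I_M -> 'I_E, child_selection y J /\
          js \notin [set J m | m in 'I_M] /\
          j' \in [set J m | m in 'I_M] /\
          selects_basis y ybar (js |: ([set J m | m in 'I_M] :\ j'))).
Proof.
move=> ne.
have dA : \det (SK *m Rt) != 0 by [].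
rewrite /influences (nz_iff dA (phi_other reg ne)) oppr_eq0.
split.
  rewrite !det_mul_colsub -sumrB.
  under eq_bigr do rewrite -mulrBr.
  move=> /extract_gen [f [hf nzf]].
  have finj : injective f.
    apply/injectiveP; case: (boolP (injectiveb f)) => // nin; move: nzf.
    by rewrite !(det_colsub_noninj _ nin) subrr eqxx.
  have njs : js \notin [set f m | m in 'I_M].
    apply/imsetP => [[m _ e]]; case: (hf m) => /negP h _; apply: h; by rewrite -e eqxx.
  have ij' : j' \in [set f m | m in 'I_M].
    case: (boolP (j' \in _)) => // nin; move: nzf; rewrite subr_eq0 => /negP []; apply/eqP.
    congr (\det _); apply/matrixP => i k; rewrite !mxE /swp.
    have fk : f k != j' by apply: contra nin => /eqP <-; apply/imsetP; exists k.
    by rewrite (negbTE fk).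
  case/imsetP: (ij') => [k0 _ e0].
  rewrite (@det_zero_col _ _ (colsub f (zcol j' SK)) k0) ?subr0 in nzf; last by move=> i; rewrite !mxE -e0 eqxx.
  have [ginj gim] := swp_img finj njs ij'.
  exists f; split; first by split => // i; case: (hf i).
  split => //; split => //.
  split; first by rewrite -gim card_imset // card_ord.
  exists (fun m => swp j' js (f m)); split => //; split => //.
  rewrite -colsub_toK; move: nzf; congr (\det _ != 0); apply/matrixP => i k; by rewrite !mxE.
move=> [J [[Jinj Jent] [njs [ij' [_ [g [ginj [gim gdet]]]]]]]].
have [hinj him] := swp_img Jinj njs ij'.
have dJ : \det (colsub (fun m => swp j' js (J m)) S) != 0.
  by rewrite (det_colsub_sameimg _ ginj hinj) // him.
have e1 : colsub (swp j' js) SK = map_mx (@toK F M E) (colsub (swp j' js) S).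
  by apply/matrixP => i k; rewrite !mxE.
have e2 : zcol j' SK = map_mx (@toK F M E) (zcol j' S).
  apply/matrixP => i k; rewrite !mxE; case: (k =P j') => _; last by [].
  by rewrite rmorph0.
rewrite e1 e2 !qfE -rmorphB tofrac_eq0; apply: contra dJ => /eqP q0.
have := congr1 (@mev _ (aJ F J) (nvars M E)) q0.
have -> : forall u v, @mev _ (aJ F J) (nvars M E) (u - v) = mev (aJ F J) u - mev (aJ F J) v.
  by move=> u v; apply: rmorphB.
have -> : @mev _ (aJ F J) (nvars M E) 0 = 0 by apply: rmorph0.
rewrite !(qf_ev _ (conj Jinj Jent) njs).
case/imsetP: ij' => [k0 _ e0].
rewrite (@det_zero_col _ _ (colsub J (zcol j' S)) k0) ?subr0; last by move=> i; rewrite !mxE -e0 eqxx.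
move=> h; rewrite -h; apply/eqP; congr (\det _); apply/matrixP => i k; by rewrite !mxE.
Qed.
End Net2.

Theorem theorem2p2 (F : realFieldType) (M E : nat) (y ybar : 'M[F]_(M, E))
  (y_nonneg : forall m j, 0 <= y m j) (ybar_nonneg : forall m j, 0 <= ybar m j)
  (S_full_rank : \rank (stoich y ybar) = M)
  (reg : regular y ybar) (jstar : 'I_E) :
  (influences y ybar (rxn M jstar) (rxn M jstar) <->
     exists J : 'I_M -> 'I_E, child_selection y J /\
       jstar \notin [set J m | m in 'I_M] /\
       selects_basis y ybar [set J m | m in 'I_M])
  /\
  (forall j' : 'I_E, j' != jstar ->
     (influences y ybar (rxn M jstar) (rxn M j') <->
        exists J : 'I_M -> 'I_E, child_selection y J /\
          jstar \notin [set J m | m in 'I_M] /\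
          j' \in [set J m | m in 'I_M] /\
          selects_basis y ybar (jstar |: ([set J m | m in 'I_M] :\ j')))).
Proof. split; [exact: part1 | move=> j' ne; exact: part2]. Qed.
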